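(* There is an absolute constant $c>0$ such that for all integers $\sigma\ge1$ and $n$ with $\sigma<n-1$, and every string $T\in[1..\sigma]^{n-1}\#$, the number of arcs of $\mathsf{CDAWG}_T$, namely $|\mathcal{E}^r_T|+|\mathcal{F}^r_T|$, is at least $c\log n$.
   Context: Let $\#=0\notin[1..\sigma]$ and $T\in[1..\sigma]^{n-1}\#$. For a string $W$, $\mathcal{P}_T(W)$ is the set of starting positions of occurrences of $W$ in circular $T$; $\Sigma^{\ell}_T(W)=\{a: \mathcal{P}_T(aW)\neq\emptyset\}$, $\Sigma^{r}_T(W)=\{b:\mathcal{P}_T(Wb)\ne\emptyset\}$. A repeat is a string $W$ (possibly empty) with $|\mathcal{P}_T(W)|>1$; right-maximal iff $|\Sigma^r_T(W)|>1$, left-maximal iff $|\Sigma^\ell_T(W)|>1$, maximal repeat iff both; $\mathcal{M}_T$ is the set of maximal repeats. $\mathsf{ST}_T$ is the suffix tree of $T$, $\ell(v)$ the label of node $v$. $\mathcal{E}^r_T$ (resp. $\mathcal{F}^r_T$) is the set of edges $(v,w)$ of $\mathsf{ST}_T$ with $v=\mathrm{parent}(w)$, $\ell(v)\in\mathcal{M}_T$ and $\ell(w)\in\mathcal{M}_T$ (resp. $\ell(w)\notin\mathcal{M}_T$). The compact directed acyclic word graph $\mathsf{CDAWG}_T$ is the minimal compact automaton of the suffixes of $T$; its nodes are the maximal repeats of $T$ (the empty string being the source) plus one sink, and its arcs are in one-to-one correspondence with $\mathcal{E}^r_T\cup\mathcal{F}^r_T$ (equivalently, with pairs $(W,b)$,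 $W\in\mathcal{M}_T$, $b\in\Sigma^r_T(W)$). *)

(* Defs.v *)
From Stdlib Require Import Reals.
From mathcomp Require Import all_boot.
Set Implicit Arguments. Unset Strict Implicit. Unset Printing Implicit Defensive.

(* Strings are seq nat; the terminator # is 0; positions are 0-based. *)

Definition occurs_at (T W : seq nat) (i : nat) : bool :=
  (i < size T) && all (fun j => nth 0 T ((i + j) %% size T) == nth 0 W j) (iota 0 (size W)).

Definition occ (T W : seq nat) : seq nat := [seq i <- iota 0 (size T) | occurs_at T W i].

Definition left_ext (T W : seq nat) (a : nat) : Prop := occ T (a :: W) != [::].
Definition right_ext (T W : seq nat) (b : nat) : Prop := occ T (rcons W b) != [::].

Definition is_repeat (T W : seq nat) : Prop := 1 < size (occ T W).
Definition right_maximal (T W : seq nat) : Prop :=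
  exists b1 b2, b1 <> b2 /\ right_ext T W b1 /\ right_ext T W b2.
Definition left_maximal (T W : seq nat) : Prop :=
  exists a1 a2, a1 <> a2 /\ left_ext T W a1 /\ left_ext T W a2.

Definition maximal_repeat (T W : seq nat) : Prop :=
  is_repeat T W /\ right_maximal T W /\ left_maximal T W.

(* Arcs of CDAWG_T: pairs (W, b) with W \in M_T and b \in Sigma^r_T(W). *)
Definition cdawg_arc (T : seq nat) (x : seq nat * nat) : Prop :=
  maximal_repeat T x.1 /\ right_ext T x.1 x.2.

Definition valid_text (sigma n : nat) (T : seq nat) : Prop :=
  size T = n /\ nth 0 T n.-1 = 0 /\ (forall i, i < n.-1 -> 0 < nth 0 T i <= sigma).

(* Main.v *)
Require Import Defs.
From Stdlib Require Import Reals Lra.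
From mathcomp Require Import all_boot zify.
Set Implicit Arguments. Unset Strict Implicit. Unset Printing Implicit Defensive.

Definition occP (T W : seq nat) (i : nat) : bool :=
  all (fun j => nth 0 T ((i + j) %% size T) == nth 0 W j) (iota 0 (size W)).

Lemma occ_size T W : size (occ T W) = count (occP T W) (iota 0 (size T)).
Proof.
rewrite size_filter; apply: eq_in_count => i; rewrite mem_iota => /andP[_ hi].
by rewrite /occurs_at hi.
Qed.

Lemma occP_rcons T W b i :
  occP T (rcons W b) i = occP T W i && (nth 0 T ((i + size W) %% size T) == b).
Proof.
rewrite /occP size_rcons -addn1 iotaD all_cat /= add0n nth_rcons ltnn eqxx andbT.
congr andb; apply: eq_in_all => j; rewrite mem_iota => /andP[_ hj].
by rewrite nth_rcons hj.
Qed.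

Lemma occP_cons T a W i :
  occP T (a :: W) i = (nth 0 T (i %% size T) == a) && occP T W i.+1.
Proof.
rewrite /occP /= addn0; congr andb.
rewrite (iotaDl 1 0) all_map; apply: eq_all => j /=.
by rewrite add1n addnS.
Qed.

Lemma occP_per T W i : occP T W (i + size T) = occP T W i.
Proof.
apply: eq_all => j; by rewrite addnAC modnDr.
Qed.

Lemma count_shift (P : pred nat) k : P k = P 0 ->
  count (fun i => P i.+1) (iota 0 k) = count P (iota 0 k).
Proof.
move=> hP.
have -> : count (fun i => P i.+1) (iota 0 k) = count P (iota 1 k).
  by rewrite (iotaDl 1 0) count_map.
case: k hP => [|k] hP //.
have -> : iota 1 k.+1 = iota 1 k ++ [:: k.+1].
  by rewrite -(addn1 k) iotaD addnC.
rewrite count_cat /= hP addn0; lia.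
Qed.

Lemma sum_ind1 (A : seq nat) (y : nat) (c : bool) : uniq A -> y \in A ->
  \sum_(b <- A) (c && (y == b) : nat) = c.
Proof.
move=> uA yA; rewrite (big_rem y) //= eqxx andbT big1_seq ?addn0 //.
move=> b /andP[_ hb]; case: eqP hb => [<-|]; last by rewrite andbF.
by rewrite mem_rem_uniqF.
Qed.

Lemma count_part (A : seq nat) (f : nat -> nat) (P : pred nat) (s : seq nat) :
  uniq A -> (forall i, i \in s -> f i \in A) ->
  \sum_(b <- A) count (fun i => P i && (f i == b)) s = count P s.
Proof.
move=> uA; elim: s => [|x s IH] hs /=.
  by rewrite big1_seq.
rewrite big_split /= IH; last by move=> i hi; apply: hs; rewrite inE hi orbT.
by rewrite sum_ind1 // hs // inE eqxx.
Qed.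

Lemma single_sum (A : seq nat) (g : nat -> nat) : uniq A ->
  0 < \sum_(b <- A) g b ->
  ~~ has (fun b1 => has (fun b2 => (b1 != b2) && (g b1 != 0) && (g b2 != 0)) A) A ->
  exists b0, \sum_(b <- A) g b = g b0.
Proof.
move=> uA hpos hno.
have : has (fun b => g b != 0) A.
  apply/negPn/negP => /hasPn H; move: hpos; rewrite big1_seq // => b /andP[_ hb].
  by move/negPn: (H b hb) => /eqP.
case/hasP => b0 b0A gb0; exists b0.
rewrite (big_rem b0) //= big1_seq ?addn0 // => b /andP[_ hb].
apply/eqP; apply/negbNE/negP => gb; apply: (negP hno); apply/hasP; exists b0 => //.
apply/hasP; exists b; first exact: (mem_rem hb).
rewrite gb0 gb !andbT; apply/eqP => e; subst b.
by rewrite mem_rem_uniqF in hb.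
Qed.

Lemma count_le1 (P : pred nat) (s : seq nat) : uniq s ->
  (forall i j, i \in s -> j \in s -> P i -> P j -> i = j) -> count P s <= 1.
Proof.
elim: s => [|x s IH] //= /andP[xs us] h.
case hx: (P x) => /=.
  rewrite -[1]addn0 leq_add2l leqn0 -/(nat_of_bool false) eqn0Ngt -has_count.
  apply/hasPn => y ys; apply/negP => Py.
  have ex := h x y (mem_head _ _) ltac:(by rewrite inE ys orbT) hx Py.
  by rewrite ex ys in xs.
apply: IH => // i j hi hj; apply: h; by rewrite inE ?hi ?hj orbT.
Qed.

Definition goodT (sigma : nat) (T : seq nat) :=
  0 < size T /\ nth 0 T (size T).-1 = 0 /\
  (forall i, i < (size T).-1 -> 0 < nth 0 T i <= sigma).

Lemma letter_le sigma T k : goodT sigma T -> k < size T -> nth 0 T k <= sigma.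
Proof.
move=> [n0 [hl hs]] hk.
case: (ltnP k (size T).-1) => h; first by case/andP: (hs k h).
have -> : k = (size T).-1 by lia.
by rewrite hl.
Qed.

Lemma zero_pos sigma T k : goodT sigma T -> k < size T -> nth 0 T k = 0 -> k = (size T).-1.
Proof.
move=> [n0 [hl hs]] hk h0.
case: (ltnP k (size T).-1) => h; last by lia.
by move: (hs k h); rewrite h0.
Qed.

Lemma occP_at T W i j : occP T W i -> j < size W ->
  nth 0 W j = nth 0 T ((i + j) %% size T).
Proof.
move=> /allP H hj; apply/esym/eqP; apply: H; by rewrite mem_iota.
Qed.

Lemma occP_letter sigma T W i j : goodT sigma T -> occP T W i -> j < size W ->
  nth 0 W j <= sigma.
Proof.
move=> g H hj; rewrite (occP_at H hj); apply: (letter_le g).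
by rewrite ltn_mod; case: g.
Qed.

Lemma long_occ sigma T W : goodT sigma T -> size T <= size W ->
  count (occP T W) (iota 0 (size T)) <= 1.
Proof.
move=> g hW; have n0 : 0 < size T by case: g.
apply: count_le1; first exact: iota_uniq.
move=> i j; rewrite !mem_iota !add0n => /andP[_ hi] /andP[_ hj] Pi Pj.
set d := (size T).-1 - i.
have hd : d < size W by rewrite /d; lia.
have e1 := occP_at Pi hd; have e2 := occP_at Pj hd.
have hid : i + d = (size T).-1 by rewrite /d; lia.
rewrite hid modn_small in e1; last by lia.
have [_ [hl _]] := g; rewrite hl in e1.
have e3 : (j + d) %% size T = (size T).-1.
  apply: (zero_pos g); first by rewrite ltn_mod.
  by rewrite -e2.
have : (j + d == i + d %[mod size T]) by rewrite e3 hid modn_small //; lia.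
by rewrite eqn_modDr !modn_small // => /eqP.
Qed.

Lemma rpart sigma T W : goodT sigma T ->
  size (occ T W) = \sum_(b <- iota 0 sigma.+1) size (occ T (rcons W b)).
Proof.
move=> g; have n0 : 0 < size T by case: g.
under eq_bigr => b _ do rewrite occ_size (eq_count (occP_rcons T W b)).
rewrite occ_size (count_part (f := fun i => nth 0 T ((i + size W) %% size T))) //.
  exact: iota_uniq.
move=> i _; rewrite mem_iota add0n ltnS; apply: (letter_le g).
by rewrite ltn_mod.
Qed.

Lemma lpart sigma T W : goodT sigma T ->
  size (occ T W) = \sum_(a <- iota 0 sigma.+1) size (occ T (a :: W)).
Proof.
move=> g; have n0 : 0 < size T by case: g.
under eq_bigr => b _ do rewrite occ_size (eq_count (occP_cons T b W)).
under eq_bigr => b _ do rewrite (eq_count (fun i => andbC _ (occP T W i.+1))).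
rewrite (@count_part _ (fun i => nth 0 T (i %% size T)) (fun i => occP T W i.+1)).
- rewrite occ_size count_shift //.
  by rewrite -[size T]add0n occP_per.
- exact: iota_uniq.
move=> i _; rewrite mem_iota add0n ltnS; apply: (letter_le g).
by rewrite ltn_mod.
Qed.

Definition twob (A : seq nat) (g : nat -> nat) :=
  has (fun b1 => has (fun b2 => (b1 != b2) && (g b1 != 0) && (g b2 != 0)) A) A.
Definition rmb sigma T W := twob (iota 0 sigma.+1) (fun b => size (occ T (rcons W b))).
Definition lmb sigma T W := twob (iota 0 sigma.+1) (fun a => size (occ T (a :: W))).
Definition mrb sigma T W := (1 < size (occ T W)) && rmb sigma T W && lmb sigma T W.

Lemma sum_le_const (K : seq nat) (F : nat -> nat) c :
  (forall b, b \in K -> F b <= c) -> \sum_(b <- K) F b <= size K * c.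
Proof.
elim: K => [|x K IH] h; first by rewrite big_nil.
rewrite big_cons /= mulSn leq_add ?h ?mem_head // IH // => b hb.
by apply: h; rewrite inE hb orbT.
Qed.

Lemma two_sizes (A : seq nat) (g : nat -> nat) : twob A g ->
  2 <= size [seq b <- A | g b != 0].
Proof.
case/hasP => b1 h1 /hasP [b2 h2 /andP[/andP[hne g1] g2]].
apply: (@uniq_leq_size _ [:: b1; b2]); first by rewrite /= inE hne.
by move=> x; rewrite !inE => /orP[/eqP->|/eqP->]; rewrite mem_filter ?g1 ?g2.
Qed.

Definition AI (L : seq (seq nat * nat)) u := count (fun x : seq nat * nat => infix u x.1) L.

Lemma AI_sub L u v : infix u v -> AI L v <= AI L u.
Proof. move=> h; apply: sub_count => x /= hx; exact: infix_trans h hx. Qed.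

Lemma AI_split sigma T L u b : (forall W b, mrb sigma T W -> size (occ T (rcons W b)) != 0 -> (W, b) \in L) ->
  mrb sigma T u ->
  AI L (rcons u b) + size [seq b <- iota 0 sigma.+1 | size (occ T (rcons u b)) != 0] <= AI L u.
Proof.
move=> hL hm.
set K := [seq _ <- _ | _].
have hK : size K <= count (fun x : seq nat * nat => x.1 == u) L.
  rewrite -size_filter -(size_map (pair u)).
  apply: uniq_leq_size.
    rewrite map_inj_uniq; first by rewrite filter_uniq // iota_uniq.
    by move=> x y [].
  move=> x /mapP [c hc ->]; rewrite mem_filter eqxx /=.
  apply: hL => //; by move: hc; rewrite mem_filter => /andP[].
have hI : count (predI (fun x : seq nat * nat => infix (rcons u b) x.1)
                       (fun x : seq nat * nat => x.1 == u)) L = 0.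
  apply/eqP; rewrite -leqn0 leqNgt -has_count; apply/hasPn => x _ /=.
  apply/negP => /andP[h1 /eqP h2]; move: (size_infix h1); by rewrite h2 size_rcons ltnn.
have hU : count (predU (fun x : seq nat * nat => infix (rcons u b) x.1)
                       (fun x : seq nat * nat => x.1 == u)) L <= AI L u.
  apply: sub_count => x /= /orP[h | /eqP ->]; last exact: infix_refl.
  exact: infix_trans (infix_rcons u b) h.
have := count_predUI (fun x : seq nat * nat => infix (rcons u b) x.1)
                       (fun x : seq nat * nat => x.1 == u) L.
move: hU hK; rewrite /AI hI; lia.
Qed.


Lemma main sigma T (L : seq (seq nat * nat)) : goodT sigma T ->
  (forall W b, mrb sigma T W -> size (occ T (rcons W b)) != 0 -> (W, b) \in L) ->
  forall m u, AI L u * (size T).+1 + (size T - size u) < m ->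
  size (occ T u) <= 2 ^ AI L u.
Proof.
move=> g hL; elim=> [|m IH] u hm //.
have e0 : 0 < 2 ^ AI L u by rewrite expn_gt0.
case: (ltnP (size (occ T u)) 2) => h2; first by lia.
case: (leqP (size T) (size u)) => hsz.
  by have := long_occ g hsz; rewrite -occ_size; lia.
have uA := iota_uniq 0 sigma.+1.
case hr: (rmb sigma T u); last first.
  have [b0 eb0] := @single_sum _ (fun b => size (occ T (rcons u b))) uA
    ltac:(rewrite -(rpart _ g); lia) ltac:(by move: hr; rewrite /rmb /twob => ->).
  rewrite (rpart _ g) eb0.
  have hA := AI_sub L (infix_rcons u b0).
  have := leq_mul hA (leqnn (size T).+1).
  move=> hmul; apply: leq_trans (IH _ _) _.
    by rewrite size_rcons; lia.
  by rewrite leq_pexp2l.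
case hl: (lmb sigma T u); last first.
  have [b0 eb0] := @single_sum _ (fun b => size (occ T (b :: u))) uA
    ltac:(rewrite -(lpart _ g); lia) ltac:(by move: hl; rewrite /lmb /twob => ->).
  rewrite (lpart _ g) eb0.
  have hA := AI_sub L (infix_cons u b0).
  have := leq_mul hA (leqnn (size T).+1).
  move=> hmul; apply: leq_trans (IH _ _) _.
    move: hmul hm hsz => /=; lia.
  by rewrite leq_pexp2l.
have hmr : mrb sigma T u by rewrite /mrb hr hl andbT; lia.
have hsplit := fun b => AI_split b hL hmr.
set K : seq nat := [seq b <- iota 0 sigma.+1 | size (occ T (rcons u b)) != 0] in hsplit *.
have hK2 : 2 <= size K by exact: two_sizes hr.
rewrite (rpart _ g).
have -> : \sum_(b <- iota 0 sigma.+1) size (occ T (rcons u b)) =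
          \sum_(b <- K) size (occ T (rcons u b)).
  rewrite big_filter [RHS]big_mkcond /=; apply: eq_bigr => b _.
  by case: eqP => // ->.
clearbody K.
apply: (@leq_trans (size K * 2 ^ (AI L u - size K))).
  apply: sum_le_const => b hb.
  have hs := hsplit b.
  have hmul : (AI L (rcons u b)).+1 * (size T).+1 <= AI L u * (size T).+1.
    by rewrite leq_mul2r /=; move: hs hK2; lia.
  apply: leq_trans (IH _ _) _.
    by rewrite size_rcons; move: hmul hm hsz; rewrite mulSn; lia.
  rewrite leq_pexp2l //; change (AI L (@rcons nat u b) <= AI L u - size K); move: hs; lia.
have hs := hsplit 0.
apply: (@leq_trans (2 ^ size K * 2 ^ (AI L u - size K))).
  by apply: leq_mul => //; apply: ltnW; apply: ltn_expl.
have hKA : size K <= AI L u by move: hs; lia.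
by rewrite -expnD subnKC.
Qed.

Lemma occ_ne T W : size (occ T W) != 0 -> exists i, occP T W i.
Proof.
case e: (occ T W) => [|i s] // _.
have : i \in occ T W by rewrite e mem_head.
by rewrite mem_filter => /andP[/andP[_ h] _]; exists i.
Qed.

Lemma rext_letter sigma T W b : goodT sigma T ->
  size (occ T (rcons W b)) != 0 -> b < sigma.+1.
Proof.
move=> g /occ_ne [i h]; rewrite ltnS.
have := occP_letter g h (_ : size W < size (rcons W b)).
by rewrite nth_rcons ltnn eqxx size_rcons; apply.
Qed.

Lemma lext_letter sigma T W a : goodT sigma T ->
  size (occ T (a :: W)) != 0 -> a < sigma.+1.
Proof.
move=> g /occ_ne [i h]; rewrite ltnS.
by have := occP_letter g h (_ : 0 < size (a :: W)); apply.
Qed.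

Lemma twob_iff (A : seq nat) (g : nat -> nat) : (forall b, g b != 0 -> b \in A) ->
  twob A g <-> exists b1 b2, b1 <> b2 /\ g b1 != 0 /\ g b2 != 0.
Proof.
move=> hA; split.
  case/hasP => b1 _ /hasP [b2 _ /andP[/andP[/eqP ne g1] g2]].
  by exists b1, b2.
move=> [b1 [b2 [ne [g1 g2]]]]; apply/hasP; exists b1; first exact: hA.
apply/hasP; exists b2; first exact: hA.
by rewrite g1 g2 !andbT; apply/eqP.
Qed.

Fixpoint strs (A : seq nat) (k : nat) : seq (seq nat) :=
  if k is k'.+1 then [seq a :: s | a <- A, s <- strs A k'] else [:: [::]].

Lemma mem_strs (A s : seq nat) : all (mem A) s -> s \in strs A (size s).
Proof.
elim: s => [|a s IH] //= /andP[ha hs].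
by apply: allpairs_f => //; apply: IH.
Qed.

Definition arcb sigma T (x : seq nat * nat) :=
  mrb sigma T x.1 && (size (occ T (rcons x.1 x.2)) != 0).

Definition theL sigma T : seq (seq nat * nat) :=
  undup [seq x <- [seq (W, b) | W <- flatten [seq strs (iota 0 sigma.+1) k | k <- iota 0 (size T)],
                                 b <- iota 0 sigma.+1] | arcb sigma T x].

Lemma inL sigma T x : goodT sigma T -> arcb sigma T x -> x \in theL sigma T.
Proof.
move=> g hx; rewrite mem_undup mem_filter hx andTb.
case: x hx => W b /andP[/andP[/andP[h2 _] _] hb]; rewrite /= in h2 hb.
apply/allpairsP; exists (W, b); split=> //; last by rewrite mem_iota (rext_letter g hb).
apply/flatten_mapP; exists (size W).
  rewrite mem_iota /= ltnNge; apply/negP => hW.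
  by rewrite add0n in hW; have := long_occ g hW; rewrite -occ_size; lia.
apply: mem_strs; apply/allP => c hc.
have [i hi] : exists i, occP T W i by apply: occ_ne; lia.
have := occP_letter g hi (_ : index c W < size W); rewrite index_mem nth_index //.
by move=> /(_ hc) hc2; rewrite inE mem_iota add0n ltnS hc2.
Qed.

Lemma arc_iff sigma T x : goodT sigma T -> cdawg_arc T x <-> arcb sigma T x.
Proof.
move=> g; case: x => W b.
have E : forall s : seq nat, (size s != 0) = (s != [::]) by move=> s; rewrite size_eq0.
have [R1 R2] := @twob_iff (iota 0 sigma.+1) (fun b => size (occ T (rcons W b)))
   (fun a ha => ltac:(by rewrite mem_iota /= (rext_letter g ha))).
have [L1 L2] := @twob_iff (iota 0 sigma.+1) (fun a => size (occ T (a :: W)))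
   (fun a ha => ltac:(by rewrite mem_iota /= (lext_letter g ha))).
rewrite /cdawg_arc /arcb /mrb /maximal_repeat /is_repeat /right_maximal /left_maximal /rmb /lmb /right_ext /left_ext.
split.
  move=> [[h1 [[b1 [b2 [n [r1 r2]]]] [a1 [a2 [m [l1 l2]]]]]] rb].
  have -> : twob (iota 0 sigma.+1) (fun b => size (occ T (rcons W b))).
    by apply: R2; exists b1, b2; rewrite !E.
  have -> : twob (iota 0 sigma.+1) (fun a => size (occ T (a :: W))).
    by apply: L2; exists a1, a2; rewrite !E.
  by rewrite h1 E rb.
move=> /andP[/andP[/andP[h1 /R1 [b1 [b2 [n [r1 r2]]]]] /L1 [a1 [a2 [m [l1 l2]]]]] rb].
split; last by rewrite -E.
split=> //; split; [exists b1, b2 | exists a1, a2]; by rewrite -!E.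
Qed.

Lemma INR_expn k : INR (2 ^ k) = pow 2 k.
Proof.
elim: k => [|k IH] //; rewrite expnS mult_INR IH /=; lra.
Qed.

Lemma ln_le' (x y : R) : Rlt 0 x -> Rle x y -> Rle (ln x) (ln y).
Proof.
move=> hx hxy; case: (Rle_lt_or_eq_dec _ _ hxy) => h.
  by apply: Rlt_le; apply: ln_increasing.
rewrite h; exact: Rle_refl.
Qed.

Theorem lemma4 :
  exists c : R, Rlt 0 c /\
    forall (sigma n : nat) (T : seq nat),
      1 <= sigma -> sigma < n.-1 -> valid_text sigma n T ->
      exists L : seq (seq nat * nat),
        uniq L /\ (forall x, x \in L <-> cdawg_arc T x) /\
        Rle (Rmult c (ln (INR n))) (INR (size L)).
Proof.
exists R1; split; first exact: Rlt_0_1.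
move=> sigma n T h1 h2 [hs [hl hlet]].
have g : goodT sigma T by rewrite /goodT hs; split; [lia | split].
exists (theL sigma T); split; first exact: undup_uniq.
split.
  move=> x; rewrite (arc_iff _ g); split; last exact: inL.
  by rewrite mem_undup mem_filter => /andP[].
have hb : n <= 2 ^ size (theL sigma T).
  have := @main sigma T (theL sigma T) g _ (AI (theL sigma T) [::] * n.+1 + n + 1) [::].
  have -> : AI (theL sigma T) [::] = size (theL sigma T).
    by rewrite /AI (eq_count (a2 := predT)) ?count_predT // => x; exact: infix0s.
  rewrite occ_size (eq_count (a2 := predT)) ?count_predT ?size_iota // hs.
  apply.
    by move=> W b hm hr; apply: inL g _; rewrite /arcb hm hr.
  rewrite subn0; lia.
have hn : Rlt 0 (INR n) by apply: lt_0_INR; apply/ltP; lia.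
have hR : Rle (INR n) (pow 2 (size (theL sigma T))).
  by rewrite -INR_expn; apply: le_INR; apply/leP.
have hl2 : Rle (ln 2) 1.
  rewrite -[X in Rle _ X]ln_exp; apply: Rlt_le; apply: ln_increasing; first lra.
  have := exp_ineq1 1 ltac:(lra); lra.
rewrite Rmult_1_l.
apply: Rle_trans (ln_le' hn hR) _.
rewrite ln_pow; last lra.
have := pos_INR (size (theL sigma T)).
nra.
Qed.
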